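(* The operadic partition poset $\Pi_{\mathcal{P}erm}(n)$ associated to the set operad $\mathcal{P}erm$ is isomorphic, for every $n\ge1$, to the poset $\Pi_P(n)$ of pointed partitions of $[n]$, via the identification sending the class of $e^m_i\times(x_1,\dots,x_m)$ in $\mathcal{P}erm_m(I)$ to the block $\{x_1,\dots,x_m\}$ with $x_i$ pointed.
   Context: The set operad $\mathcal{P}erm$ has $\mathcal{P}erm_n=\{e^n_1,\dots,e^n_n\}$, right $\mathbb{S}_n$-action $e^n_k\cdot\sigma=e^n_{\sigma^{-1}(k)}$, and composition $\mu(e^n_k;e^{i_1}_{j_1},\dots,e^{i_n}_{j_n})=e^{i_1+\cdots+i_n}_{i_1+\cdots+i_{k-1}+j_k}$. For a set operad $P$ and an $m$-element set $I$, $P_m(I)$ is the set of pairs $(\nu,f)$ with $\nu\in P_m$, $f:[m]\to I$ bijective, modulo $(\nu,f)\sim(\nu\sigma,f\sigma^{-1})$ (the class of $(\nu,f)$ is written $\nu\times(f(1),\dots,f(m))$). For $C_r=[(\nu_r,f_r)]\in P(I_r)$ and $\nu\in P_t$, $\tilde\mu(\nu;C_1,\dots,C_t)$ is the class of $(\mu(\nu;\nu_1,\dots,\nu_t),f)$ with $f$ the concatenation of the $f_r$. A $P$-partition of $[n]$ is a set $\{B_j\in P(I_j)\}$ with $\{I_j\}$ a set partition of $[n]$; $\Pi_P(n)$ is ordered by $\{B_k\in P(I_k)\}\le\{C_l\in P(J_l)\}$ iff each $I_k$ is partitioned by some $J_{p_1},\dots,J_{p_t}$ with $B_k=\tilde\mu(\nu;C_{p_1},\dots,C_{p_t})$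 for some $\nu\in P_t$. A pointed partition of $[n]$ is a set partition of $[n]$ in which exactly one element of each block is emphasized (pointed). In $\Pi_P(n)$, $\lambda\le\mu$ iff $\mu$ refines $\lambda$ as a partition and the pointed elements of $\lambda$ are all pointed in $\mu$. *)

(* Defs.v *)
From mathcomp Require Import all_boot all_fingroup.
Set Implicit Arguments.
Unset Strict Implicit.
Unset Printing Implicit Defensive.

Local Open Scope group_scope.

Section PermOperad.
Variable n : nat.

(* A representative of an element of Perm_m(I) : a pair (nu, f) with
   nu = e^m_{k+1} encoded by k : 'I_m (0-based), and f : 'I_m -> 'I_n
   (a bijection onto its image I).  m ranges over 0..n. *)
Definition repfam (m : 'I_n.+1) : finType := ('I_m * {ffun 'I_m -> 'I_n})%type.
Definition rep : finType := {m : 'I_n.+1 & repfam m}.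

Definition rsize (r : rep) : nat := tag r.
Definition rop (r : rep) : nat := val (tagged r).1.
Definition rseq (r : rep) : seq 'I_n := [seq (tagged r).2 i | i <- enum 'I_(tag r)].
Definition rvalid (r : rep) : bool := uniq (rseq r).
Definition rsupp (r : rep) : {set 'I_n} := [set x in rseq r].

(* Right S_m-action on representatives: (nu, f) . s = (nu . s, f o s),
   with the Perm action e^m_k . s = e^m_{s^-1(k)}. *)
Definition ract (r : rep) (s : {perm 'I_(tag r)}) : rep :=
  @Tagged _ (tag r) repfam (s^-1 (tagged r).1, [ffun i => (tagged r).2 (s i)]).

Arguments ract : clear implicits.

Definition rclass (r : rep) : {set rep} :=
  [set r' | [exists s : {perm 'I_(tag r)}, r' == ract r s]].

Definition Pblock (C : {set rep}) : Prop := exists2 r, rvalid r & C = rclass r.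

Definition csupp (C : {set rep}) : {set 'I_n} := \bigcup_(r in C) rsupp r.

Definition PermPartition (X : {set {set rep}}) : Prop :=
  [/\ forall C, C \in X -> Pblock C,
      partition [set csupp C | C in X] [set: 'I_n] &
      {in X &, injective csupp}].

(* r is (a representative of) mu(e^t_{k+1}; r_1,...,r_t) with concatenated f:
   the operation is e^{i_1+..+i_t}_{i_1+..+i_k + j_{k+1}}. *)
Definition composite (k : nat) (rs : seq rep) (r : rep) : Prop :=
  k < size rs /\
  rseq r = flatten (map rseq rs) /\
  exists rk rest, drop k rs = rk :: rest /\
                  rop r = sumn (map rsize (take k rs)) + rop rk.

Definition is_tmu (k : nat) (cs : seq {set rep}) (B : {set rep}) : Prop :=
  exists rs : seq rep,
    [/\ size rs = size cs, all2 (fun (r : rep) (C : {set rep}) => r \in C) rs cs &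
        exists2 r, composite k rs r & B = rclass r].

Definition PermLe (X Y : {set {set rep}}) : Prop :=
  forall B, B \in X ->
    exists (cs : seq {set rep}) (k : nat),
      [/\ uniq cs, {subset cs <= Y},
          csupp B = \bigcup_(C <- cs) csupp C &
          is_tmu k cs B].

Definition pointed_partition (P : {set {set 'I_n} * 'I_n}) : Prop :=
  [/\ partition [set p.1 | p in P] [set: 'I_n],
      forall p, p \in P -> p.2 \in p.1 &
      {in P &, injective (fun p : {set 'I_n} * 'I_n => p.1)}].

Definition pointed_le (L M : {set {set 'I_n} * 'I_n}) : Prop :=
  (forall b, b \in M -> exists2 a, a \in L & b.1 \subset a.1) /\
  [set p.2 | p in L] \subset [set p.2 | p in M].

Definition pblock_of (r : rep) : {set 'I_n} * 'I_n :=
  (rsupp r, (tagged r).2 (tagged r).1).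

Definition phi (X : {set {set rep}}) : {set {set 'I_n} * 'I_n} :=
  [set pblock_of r | r in \bigcup_(C in X) C].

End PermOperad.

(* Main.v *)
Require Import Defs.
From mathcomp Require Import all_boot all_fingroup.
Set Implicit Arguments.
Unset Strict Implicit.
Unset Printing Implicit Defensive.

Local Open Scope group_scope.
Section Aux.
Variable n : nat.
Implicit Types (r : rep n) (C : {set rep n}) (X : {set {set rep n}}).

Definition pt r : 'I_n := (tagged r).2 (tagged r).1.

Lemma mem_rseq r y : (y \in rseq r) = [exists i, y == (tagged r).2 i].
Proof.
apply/mapP/existsP => [[i _ ->]|[i /eqP ->]]; first by exists i.
by exists i; rewrite ?mem_enum.
Qed.

Lemma in_rsupp r y : (y \in rsupp r) = [exists i, y == (tagged r).2 i].
Proof. by rewrite inE mem_rseq. Qed.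

Lemma size_rseq r : size (rseq r) = tag r.
Proof. by rewrite size_map size_enum_ord. Qed.

Lemma pt_rsupp r : pt r \in rsupp r.
Proof. by rewrite in_rsupp; apply/existsP; exists (tagged r).1. Qed.

Lemma pt_nth r x0 : nth x0 (rseq r) (rop r) = pt r.
Proof.
rewrite /rseq (nth_map (tagged r).1); last by rewrite size_enum_ord ltn_ord.
by rewrite nth_ord_enum.
Qed.

Lemma valid_inj r : rvalid r -> injective (tagged r).2.
Proof. by move=> H; apply/injectiveP. Qed.

Lemma inj_valid r : injective (tagged r).2 -> rvalid r.
Proof. by move=> H; rewrite /rvalid /rseq map_inj_uniq ?enum_uniq. Qed.

Lemma ract_supp r s : rsupp (@Defs.ract n r s) = rsupp r.
Proof.
apply/setP=> y; rewrite !in_rsupp /Defs.ract /=.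
apply/existsP/existsP => [[i]|[i]]; rewrite ?ffunE.
  by move=> H; exists (s i).
by move=> /eqP ->; exists (s^-1 i); rewrite ffunE permKV.
Qed.

Lemma ract_pt r s : pt (@Defs.ract n r s) = pt r.
Proof. by rewrite /pt /Defs.ract /= ffunE permKV. Qed.

Lemma ract_valid r s : rvalid r -> rvalid (@Defs.ract n r s).
Proof.
move=> /valid_inj H; apply: inj_valid => i j /=; rewrite !ffunE.
by move/H/perm_inj.
Qed.

Lemma in_rclass r r' : reflect (exists s, r' = @Defs.ract n r s) (r' \in rclass r).
Proof.
rewrite inE; apply: (iffP existsP) => [[s /eqP ->]|[s ->]]; by exists s.
Qed.

Lemma rclass_self r : r \in rclass r.
Proof.
apply/in_rclass; exists 1; case: r => m [k f] /=; rewrite /Defs.ract /=.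
have E : [ffun i => f ((1 : {perm 'I_m}) i)] = f.
  by apply/ffunP => i; rewrite ffunE perm1.
by rewrite E invg1 perm1.
Qed.

Lemma card_rsupp r : rvalid r -> #|rsupp r| = tag r.
Proof.
move=> H; rewrite /rsupp cardsE (card_uniqP H) size_rseq //.
Qed.

Lemma class_char r r' : rvalid r ->
  (r' \in rclass r) = [&& rvalid r', rsupp r' == rsupp r & pt r' == pt r].
Proof.
move=> Hr; apply/idP/idP.
  by case/in_rclass=> s ->; rewrite ract_valid // ract_supp ract_pt !eqxx.
case/and3P=> Hr' /eqP Hs /eqP Hp.
have Hm : tag r' = tag r by apply: val_inj; rewrite /= -(card_rsupp Hr) -(card_rsupp Hr') Hs.
move: Hm Hr Hr' Hs Hp; case: r => m [k f]; case: r' => m' [k' f'] /= Hm.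
subst m' => Hr Hr' Hs Hp.
have If := valid_inj Hr; have If' := valid_inj Hr'; simpl in If, If'.
have ex : forall i, exists j, f j == f' i.
  move=> i; have : f' i \in rsupp (Tagged (repfam (n:=n)) (k', f')).
    by rewrite in_rsupp; apply/existsP; exists i.
  by rewrite Hs in_rsupp => /existsP [j /eqP ->]; exists j.
pose g i := xchoose (ex i).
have gE i : f (g i) = f' i by apply/eqP; exact: (xchooseP (ex i)).
have ginj : injective g by move=> i j H; apply: If'; rewrite -!gE H.
apply/in_rclass; exists (perm ginj); rewrite /Defs.ract /=.
have E1 : (perm ginj)^-1 k = k'.
  apply: (@perm_inj _ (perm ginj)); rewrite permKV permE; apply: If.
  rewrite gE; move: Hp; rewrite /pt /=; by move=> ->.
have E2 : [ffun i => f (perm ginj i)] = f'.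
  by apply/ffunP => i; rewrite ffunE permE gE.
by rewrite E1 E2.
Qed.

Lemma blockP C r : Pblock C -> r \in C ->
  rvalid r /\ forall r', (r' \in C) = [&& rvalid r', rsupp r' == rsupp r & pt r' == pt r].
Proof.
case=> r0 H0 -> Hr; move: (Hr); rewrite class_char // => /and3P [Hv /eqP Hs /eqP Hp].
by split => // r'; rewrite class_char // Hs Hp.
Qed.

Lemma block_nonempty C : Pblock C -> exists r, r \in C.
Proof. by case=> r _ ->; exists r; exact: rclass_self. Qed.

Lemma csupp_block C r : Pblock C -> r \in C -> csupp C = rsupp r.
Proof.
move=> HC Hr; have [_ HE] := blockP HC Hr.
apply/setP => y; apply/bigcupP/idP => [[r' Hr' Hy]|Hy]; last by exists r.
by move: Hr'; rewrite HE => /and3P [_ /eqP <- _].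
Qed.

Lemma same_pb C r r' : Pblock C -> r \in C -> r' \in C -> pblock_of r' = pblock_of r.
Proof.
move=> HC Hr; have [_ HE] := blockP HC Hr.
by rewrite HE => /and3P [_ /eqP Hs /eqP Hp]; rewrite /pblock_of Hs; congr pair; exact: Hp.
Qed.

Lemma pblock_ofE r : pblock_of r = (rsupp r, pt r).
Proof. by []. Qed.

Lemma PP_cover X y : PermPartition X -> exists2 C, C \in X & y \in csupp C.
Proof.
case=> _ /and3P [/eqP Hc _ _] _.
have : y \in cover [set csupp C | C in X] by rewrite Hc inE.
by rewrite cover_imset => /bigcupP [C HC Hy]; exists C.
Qed.

Lemma PP_disj X C C' y : PermPartition X -> C \in X -> C' \in X ->
  y \in csupp C -> y \in csupp C' -> C = C'.
Proof.
case=> _ /and3P [_ /trivIsetP Ht _] Hi HC HC' Hy Hy'.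
apply: Hi => //; apply/eqP; apply/negPn/negP => Hne.
have := Ht _ _ (imset_f _ HC) (imset_f _ HC') Hne.
by move/disjointFr => /(_ y Hy); rewrite Hy'.
Qed.

Lemma in_phi X p : reflect (exists C r, [/\ C \in X, r \in C & p = pblock_of r]) (p \in phi X).
Proof.
apply: (iffP imsetP) => [[r /bigcupP [C HC Hr] ->]|[C [r [HC Hr ->]]]].
  by exists C, r.
by exists r => //; apply/bigcupP; exists C.
Qed.

Lemma exists_rep s k : uniq s -> k < size s ->
  exists r, [/\ rvalid r, rseq r = s & rop r = k].
Proof.
move=> Hu Hk.
have hs : size s < n.+1.
  by rewrite ltnS -(card_uniqP Hu); apply: leq_trans (max_card _) _; rewrite card_ord.
case: s Hu Hk hs => [//|x0 s'] Hu Hk hs.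
pose m := Ordinal hs.
have hk : k < m by [].
pose r : rep n := existT _ m (Ordinal hk, [ffun i : 'I_m => nth x0 (x0 :: s') i]).
have Hs : rseq r = x0 :: s'.
  rewrite /rseq /=.
  have -> : [seq [ffun i : 'I_m => nth x0 (x0 :: s') i] i | i <- enum 'I_m]
          = [seq nth x0 (x0 :: s') (val i) | i <- enum 'I_m].
    by apply: eq_map => i; rewrite ffunE.
  by rewrite (map_comp (nth x0 (x0 :: s')) val) val_enum_ord -/(mkseq _ _) mkseq_nth.
by exists r; split => //; rewrite /rvalid Hs.
Qed.

Lemma composite_pt k rs r : composite k rs r ->
  exists rk rest, drop k rs = rk :: rest /\ pt r = pt rk.
Proof.
case=> Hk [Hs [rk [rest [Hd Hop]]]]; exists rk, rest; split => //.
have Hsz : size (flatten [seq rseq i | i <- take k rs]) = sumn [seq rsize i | i <- take k rs].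
  rewrite size_flatten /shape -map_comp; congr sumn; apply: eq_map => x /=.
  by rewrite size_rseq.
rewrite -(pt_nth r (pt r)) Hs Hop -Hsz.
rewrite -{1}(cat_take_drop k rs) Hd map_cat flatten_cat /=.
rewrite nth_cat ltnNge leq_addr /= addKn nth_cat size_rseq ltn_ord.
exact: pt_nth.
Qed.


Lemma phi_fst X : PermPartition X ->
  [set p.1 | p in phi X] = [set csupp C | C in X].
Proof.
case=> Hb _ _; apply/setP => A; apply/imsetP/imsetP.
  case=> p /in_phi [C [r [HC Hr ->]]] ->; exists C => //.
  by rewrite (csupp_block (Hb _ HC) Hr).
case=> C HC ->; have [r Hr] := block_nonempty (Hb _ HC).
exists (pblock_of r); first by apply/in_phi; exists C, r.
by rewrite (csupp_block (Hb _ HC) Hr).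
Qed.

Lemma part1 X : PermPartition X -> pointed_partition (phi X).
Proof.
move=> HX; have [Hb Hp Hi] := HX; split.
- by rewrite phi_fst.
- by move=> p /in_phi [C [r [_ _ ->]]]; exact: pt_rsupp.
move=> p q /in_phi [C [r [HC Hr ->]]] /in_phi [C' [r' [HC' Hr' ->]]] /= Heq.
have E : C = C'.
  by apply: Hi => //; rewrite (csupp_block (Hb _ HC) Hr) (csupp_block (Hb _ HC') Hr').
by subst C'; rewrite (same_pb (Hb _ HC) Hr Hr').
Qed.

Lemma phi_sub X Y : PermPartition X -> PermPartition Y ->
  phi X \subset phi Y -> X \subset Y.
Proof.
move=> [HbX _ _] [HbY _ _] /subsetP Hs; apply/subsetP => C HC.
have [r Hr] := block_nonempty (HbX _ HC).
have : pblock_of r \in phi Y by apply: Hs; apply/in_phi; exists C, r.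
case/in_phi => [C' [r' [HC' Hr' E]]].
have E1 : rsupp r = rsupp r' by move: (congr1 fst E).
have E2 : pt r = pt r' by move: (congr1 snd E).
suff -> : C = C' by [].
have [_ H1] := blockP (HbX _ HC) Hr; have [_ H2] := blockP (HbY _ HC') Hr'.
by apply/setP => x; rewrite H1 H2 E1 E2.
Qed.

Definition cls (A : {set 'I_n}) (x : 'I_n) : {set rep n} :=
  [set r : rep n | [&& rvalid r, rsupp r == A & pt r == x]].

Lemma realize (A : {set 'I_n}) x : x \in A ->
  exists r, [/\ rvalid r, rsupp r = A & pt r = x].
Proof.
move=> Hx; have Hu := enum_uniq (mem A).
have Hk : index x (enum A) < size (enum A) by rewrite index_mem mem_enum.
have [r [Hv Hs Ho]] := exists_rep Hu Hk.
exists r; split => //.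
  by apply/setP => y; rewrite inE Hs mem_enum.
by rewrite -(pt_nth r x) Hs Ho nth_index // mem_enum.
Qed.

Lemma cls_rclass r : rvalid r -> cls (rsupp r) (pt r) = rclass r.
Proof. by move=> Hv; apply/setP => y; rewrite inE class_char. Qed.

Lemma part2 P : pointed_partition P ->
  exists2 X : {set {set rep n}}, PermPartition X & phi X = P.
Proof.
case=> Hpart Hin Hinj.
have Hre : forall p, p \in P -> exists r, [/\ rvalid r, rsupp r = p.1 & pt r = p.2].
  by move=> p Hp; apply: realize; apply: Hin.
have HB : forall p, p \in P -> Pblock (cls p.1 p.2).
  move=> p Hp; have [r [Hv <- <-]] := Hre p Hp.
  by exists r; rewrite ?cls_rclass.
have Hcs : forall p, p \in P -> csupp (cls p.1 p.2) = p.1.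
  move=> p Hp; have [r [Hv Hs Hpt]] := Hre p Hp.
  rewrite (csupp_block (HB p Hp) (_ : r \in _)) //.
  by rewrite inE Hv Hs Hpt !eqxx.
exists [set cls p.1 p.2 | p in P].
  split.
  - by move=> C /imsetP [p Hp ->]; apply: HB.
  - rewrite -imset_comp.
    have -> : [set (@csupp n \o (fun p : {set 'I_n} * 'I_n => cls p.1 p.2)) x | x in P]
            = [set p.1 | p in P].
      by apply: eq_in_imset => p Hp /=; rewrite Hcs.
    exact: Hpart.
  - move=> C C' /imsetP [p Hp ->] /imsetP [q Hq ->].
    by rewrite !Hcs // => /(Hinj _ _ Hp Hq) ->.
apply/setP => q; apply/in_phi/idP.
  case=> C [r [/imsetP [p Hp ->] Hr ->]].
  move: Hr; rewrite inE => /and3P [_ /eqP Hs /eqP Hpt].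
  by rewrite pblock_ofE Hs Hpt -surjective_pairing.
move=> Hq; have [r [Hv Hs Hpt]] := Hre q Hq.
exists (cls q.1 q.2), r; split.
- by apply: imset_f.
- by rewrite inE Hv Hs Hpt !eqxx.
by rewrite pblock_ofE Hs Hpt -surjective_pairing.
Qed.


Lemma all2_drop (T1 T2 : Type) (Pr : T1 -> T2 -> bool) (s1 : seq T1) (s2 : seq T2) k a rest :
  all2 Pr s1 s2 -> drop k s1 = a :: rest -> exists b rest', drop k s2 = b :: rest' /\ Pr a b.
Proof.
elim: s1 s2 k => [|x s1 IH] [|y s2] k //= /andP [Hxy Hall].
case: k => [|k] /=; last by apply: IH.
by case=> <- _; exists y, s2.
Qed.

Lemma in_bigcup_seq (cs : seq {set rep n}) y :
  reflect (exists2 C, C \in cs & y \in csupp C) (y \in \bigcup_(C <- cs) csupp C).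
Proof. by rewrite bigcup_seq; apply: (iffP bigcupP). Qed.

Lemma size_flat (t : seq (rep n)) : size (flatten [seq rseq i | i <- t]) = sumn [seq rsize i | i <- t].
Proof.
rewrite size_flatten /shape -map_comp; congr sumn; apply: eq_map => x /=.
by rewrite size_rseq.
Qed.

Lemma le_fwd X Y : PermPartition X -> PermPartition Y ->
  PermLe X Y -> pointed_le (phi X) (phi Y).
Proof.
move=> HX HY Hle; have [HbX _ _] := HX; have [HbY _ _] := HY; split.
  move=> b /in_phi [C [r [HC Hr ->]]].
  have Hy : pt r \in csupp C by rewrite (csupp_block (HbY _ HC) Hr) pt_rsupp.
  have [B HB HyB] := PP_cover (pt r) HX.
  have [cs [k [Hu Hsub Hcs _]]] := Hle B HB.
  move: (HyB); rewrite Hcs => /in_bigcup_seq [C' HC' HyC'].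
  have EC : C' = C by apply: (PP_disj HY (Hsub _ HC') HC HyC' Hy).
  subst C'.
  have [rB HrB] := block_nonempty (HbX _ HB).
  exists (pblock_of rB); first by apply/in_phi; exists B, rB.
  rewrite /= -(csupp_block (HbX _ HB) HrB) -(csupp_block (HbY _ HC) Hr) Hcs.
  by apply/subsetP => z Hz; apply/in_bigcup_seq; exists C.
apply/subsetP => x /imsetP [p /in_phi [B [r [HB Hr ->]]] ->].
have [cs [k [Hu Hsub Hcs [rs [Hsz Hall [r0 Hcomp EB]]]]]] := Hle B HB.
have [rk [rest [Hd Hpt]]] := composite_pt Hcomp.
have [C [rest' [Hd' HrkC]]] := all2_drop Hall Hd.
have HC : C \in Y by apply: Hsub; apply: (mem_drop (n0 := k)); rewrite Hd' mem_head.
have -> : (pblock_of r).2 = pt rk.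
  rewrite -Hpt; move: Hr; rewrite EB => /in_rclass [s ->].
  exact: ract_pt.
by apply/imsetP; exists (pblock_of rk) => //; apply/in_phi; exists C, rk.
Qed.


Lemma le_bwd X Y : PermPartition X -> PermPartition Y ->
  pointed_le (phi X) (phi Y) -> PermLe X Y.
Proof.
move=> HX HY [Hle1 /subsetP Hle2]; have [HbX _ _] := HX; have [HbY _ _] := HY.
move=> B HB.
have [rB HrB] := block_nonempty (HbX _ HB).
have [HvB HEB] := blockP (HbX _ HB) HrB.
have HA := csupp_block (HbX _ HB) HrB.
have : pt rB \in [set p.2 | p in phi Y].
  by apply: Hle2; apply/imsetP; exists (pblock_of rB) => //; apply/in_phi; exists B, rB.
case/imsetP => q /in_phi [C0 [r0 [HC0 Hr0 ->]]] /= Hx.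
have Hclaim : forall C y, C \in Y -> y \in csupp C -> y \in csupp B -> csupp C \subset csupp B.
  move=> C y HC HyC HyB.
  have [r Hr] := block_nonempty (HbY _ HC).
  have [a /in_phi [B' [r' [HB' Hr' ->]]]] : exists2 a, a \in phi X & (pblock_of r).1 \subset a.1.
    by apply: Hle1; apply/in_phi; exists C, r.
  rewrite /= -(csupp_block (HbY _ HC) Hr) -(csupp_block (HbX _ HB') Hr') => Hsub.
  have EB : B' = B by apply: (PP_disj HX HB' HB (subsetP Hsub _ HyC) HyB).
  by rewrite -EB.
pose S := [set C in Y | csupp C \subset csupp B].
have HxC0 : pt rB \in csupp C0 by rewrite Hx (csupp_block (HbY _ HC0) Hr0) pt_rsupp.
have HxB : pt rB \in csupp B by rewrite HA pt_rsupp.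
have HC0S : C0 \in S by rewrite inE HC0 (Hclaim _ _ HC0 HxC0 HxB).
pose cs := enum S.
have HcsY : forall C, C \in cs -> C \in Y by move=> C; rewrite mem_enum inE => /andP [].
have Hcs : csupp B = \bigcup_(C <- cs) csupp C.
  apply/setP => y; apply/idP/in_bigcup_seq.
    move=> Hy; have [C HC HyC] := PP_cover y HY.
    by exists C => //; rewrite mem_enum inE HC (Hclaim _ _ HC HyC Hy).
  by case=> C; rewrite mem_enum inE => /andP [_ /subsetP Hs] /Hs.
pose pk (C : {set rep n}) := odflt rB [pick r in C].
have pk_in : forall C, C \in Y -> pk C \in C.
  move=> C HC; rewrite /pk; case: pickP => [r Hr //|H].
  by have [r Hr] := block_nonempty (HbY _ HC); move: (H r); rewrite Hr.
have pk_supp : forall C, C \in Y -> rsupp (pk C) = csupp C.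
  by move=> C HC; rewrite (csupp_block (HbY _ HC) (pk_in C HC)).
pose rs := [seq pk C | C <- cs].
have Hu : uniq (flatten [seq rseq i | i <- rs]).
  have Hgen : forall cs1 : seq {set rep n}, (forall C, C \in cs1 -> C \in Y) -> uniq cs1 ->
      uniq (flatten [seq rseq i | i <- [seq pk C | C <- cs1]]).
    elim => [//|C cs' IH] HY' /= /andP [HCn Hu'].
    rewrite cat_uniq IH ?andbT //; last by move=> C' HC'; apply: HY'; rewrite inE HC' orbT.
  have HC : C \in Y by apply: HY'; rewrite mem_head.
  have -> : uniq (rseq (pk C)) by exact: (proj1 (blockP (HbY _ HC) (pk_in C HC))).
  apply/hasPn => y /flattenP [s' /mapP [r' /mapP [C' HC' ->] ->] Hy'].
  apply/negP => Hy.
  have HC'Y : C' \in Y by apply: HY'; rewrite inE HC' orbT.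
  have E : C = C'.
    apply: (PP_disj HY HC HC'Y (y := y)).
      by rewrite -pk_supp // inE.
    by rewrite -pk_supp // inE.
  by move: HCn; rewrite E HC'.
  by apply: Hgen => //; exact: enum_uniq.
pose k := index C0 cs.
have Hk : k < size cs by rewrite index_mem mem_enum.
have Hkr : k < size rs by rewrite size_map.
have Hdrop := drop_nth rB Hkr.
have Hnth : nth rB rs k = pk C0 by rewrite (nth_map C0) // nth_index // mem_enum.
rewrite Hnth in Hdrop.
pose K := sumn [seq rsize i | i <- take k rs] + rop (pk C0).
have HK : K < size (flatten [seq rseq i | i <- rs]).
  rewrite -{1}(cat_take_drop k rs) Hdrop map_cat flatten_cat size_cat size_flat /= /K.
  by rewrite size_cat ltn_add2l size_rseq; apply: leq_trans (leq_addr _ _); exact: ltn_ord.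
have [r [Hv Hrs Hro]] := exists_rep Hu HK.
have Hcomp : composite k rs r.
  split => //; split => //; exists (pk C0), (drop k.+1 rs); split => //.
exists cs, k; split => //.
- exact: enum_uniq.
exists rs; split.
- by rewrite size_map.
- rewrite /rs; elim: (cs) HcsY => [//|C cs' IH] HY' /=.
  rewrite pk_in ?IH //; first by move=> C' HC'; apply: HY'; rewrite inE HC' orbT.
  by apply: HY'; rewrite mem_head.
exists r => //.
have Hpt : pt r = pt rB.
  have [rk [rest [Hd Hp]]] := composite_pt Hcomp.
  move: Hd; rewrite Hdrop => [[Erk _]]; rewrite Hp -Erk Hx.
  by have := same_pb (HbY _ HC0) Hr0 (pk_in C0 HC0) => /(congr1 snd).
have Hsupp : rsupp r = rsupp rB.
  rewrite -HA Hcs; apply/setP => y; rewrite inE Hrs.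
  apply/flattenP/in_bigcup_seq.
    case=> s' /mapP [r' /mapP [C HC ->] ->] Hy.
    by exists C => //; rewrite -pk_supp ?HcsY // inE.
  case=> C HC Hy; exists (rseq (pk C)); first by apply: map_f; apply: map_f.
  by move: Hy; rewrite -pk_supp ?HcsY // inE.
rewrite -(cls_rclass Hv) Hpt Hsupp; apply/setP => z; rewrite HEB inE //.
Qed.

End Aux.

Local Close Scope group_scope.

Theorem mainTheorem4 (n : nat) : 0 < n ->
  [/\ (forall X : {set {set rep n}}, PermPartition X -> pointed_partition (phi X)),
      (forall P, pointed_partition P ->
         exists2 X : {set {set rep n}}, PermPartition X & phi X = P),
      (forall X Y : {set {set rep n}}, PermPartition X -> PermPartition Y ->
         phi X = phi Y -> X = Y) &
      (forall X Y : {set {set rep n}}, PermPartition X -> PermPartition Y ->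
         (PermLe X Y <-> pointed_le (phi X) (phi Y)))].
Proof.
move=> _; split.
- exact: part1.
- exact: part2.
- move=> X Y HX HY E; apply/eqP; rewrite eqEsubset !phi_sub ?E //.
- by move=> X Y HX HY; split; [exact: le_fwd | exact: le_bwd].
Qed.
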